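(* Let $Q$ be a Moufang loop, $(c,f)$ a left pseudoautomorphism of $Q$, and $x\in Q$. Then $\big(x^{-1}f^{-1}(c^{-1}f(x)c),\ \mu_{f,x}\big)$ is a left pseudoautomorphism of $Q$, where $\mu_{f,x}=R_x^{-1}f^{-1}R_{f(x)}f$.
   Context: A loop is Moufang if it satisfies $xy\cdot zx=(x\cdot yz)x$ for all $x,y,z$. $L_x(y)=xy$, $R_x(y)=yx$. A pair $(c,f)$ with $c\in Q$ and $f$ a permutation of $Q$ is a (left) pseudoautomorphism of $Q$ if $cf(x)\cdot f(y)=cf(xy)$ for all $x,y\in Q$; $c$ is called a companion of $f$. *)

(* Defs.v *)
From mathcomp Require Import ssreflect ssrfun ssrbool.
Set Implicit Arguments. Unset Strict Implicit.

(* A loop (Q, *, \, /, 1): the divisions make L_x and R_x bijections. *)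
Record loop := Loop {
  lcar :> Type;
  lmul : lcar -> lcar -> lcar;
  lldiv : lcar -> lcar -> lcar;
  lrdiv : lcar -> lcar -> lcar;
  lone : lcar;
  _ : forall x y, lmul x (lldiv x y) = y;
  _ : forall x y, lldiv x (lmul x y) = y;
  _ : forall x y, lmul (lrdiv y x) x = y;
  _ : forall x y, lrdiv (lmul y x) x = y;
  _ : forall x, lmul lone x = x;
  _ : forall x, lmul x lone = x
}.

Section Defs.
Variable Q : loop.
Local Notation "x * y" := (lmul x y).

Definition Lmap (x : Q) : Q -> Q := fun y => x * y.
Definition Rmap (x : Q) : Q -> Q := fun y => y * x.
Definition Rinv (x : Q) : Q -> Q := fun y => lrdiv y x.

(* inverse: x^{-1} with x * x^{-1} = 1 (two-sided in Moufang loops) *)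
Definition linv (x : Q) : Q := lldiv x (lone Q).

Definition moufang : Prop :=
  forall x y z : Q, (x * y) * (z * x) = (x * (y * z)) * x.

Definition left_pseudoaut (c : Q) (f : Q -> Q) : Prop :=
  bijective f /\ forall x y : Q, (c * f x) * f y = c * f (x * y).

Definition mu (f finv : Q -> Q) (x : Q) : Q -> Q :=
  Rinv x \o finv \o Rmap (f x) \o f.
End Defs.

(* Main.v *)
Require Import Defs.
From mathcomp Require Import ssreflect ssrfun ssrbool.

Set Implicit Arguments.
Section L.
Variable Q : loop.
Local Notation "x * y" := (lmul x y).
Lemma mulKV (x y : Q) : x * lldiv x y = y. Proof. by case: Q x y. Qed.
Lemma divKl (x y : Q) : lldiv x (x * y) = y. Proof. by case: Q x y. Qed.
Lemma mulRV (x y : Q) : lrdiv y x * x = y. Proof. by case: Q x y. Qed.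
Lemma divKr (x y : Q) : lrdiv (y * x) x = y. Proof. by case: Q x y. Qed.
Lemma mul1l (x : Q) : lone Q * x = x. Proof. by case: Q x. Qed.
Lemma mul1r (x : Q) : x * lone Q = x. Proof. by case: Q x. Qed.
Lemma canl (x y z : Q) : x * y = x * z -> y = z.
Proof. by move=> h; rewrite -(divKl x y) h divKl. Qed.
Lemma canr (x y z : Q) : y * x = z * x -> y = z.
Proof. by move=> h; rewrite -(divKr x y) h divKr. Qed.
End L.
Arguments canl {Q}.
Arguments divKr {Q}.
Arguments divKl {Q}.
Arguments mul1r {Q}.
Arguments mul1l {Q}.
Arguments mulKV {Q}.
Arguments mulRV {Q}.
Arguments canr {Q}.

Theorem mainTheorem11 (Q : loop) (c : Q) (f finv : Q -> Q) (x : Q) :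
  moufang Q ->
  cancel f finv -> cancel finv f ->
  left_pseudoaut c f ->
  left_pseudoaut
    (lmul (linv x) (finv (lmul (lmul (linv c) (f x)) c)))
    (mu f finv x).
Proof.
move=> M fK finvK [_ P].
set y := f x.
have LIP : forall a b : Q, lldiv a b = lmul (linv a) b.
  move=> a b; apply: (canl a); rewrite mulKV.
  apply: (canr a); rewrite -M /linv mulKV mul1l //.
have FL : forall a b : Q, lmul a (lmul b a) = lmul (lmul a b) a.
  by move=> a b; have := M a (lone Q) b; rewrite mul1r mul1l.
have f1 : f (lone Q) = lone Q.
  apply: (canl c); rewrite mul1r.
  have := P (lone Q) (finv (lone Q)); rewrite finvK !mul1r mul1l => ->.
  by rewrite finvK mul1r.
set al := fun a => lldiv x (finv (lldiv c (lmul y (lmul c (f a))))).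
set ga := fun t => lldiv x (lrdiv (finv (lldiv c (lmul (lmul y (lmul c (f t))) y))) x).
have key : forall a b, lmul (al a) (mu f finv x b) = ga (lmul a b).
  move=> a b; rewrite /ga /al /mu /Rinv /Rmap /=.
  apply: (canl x); rewrite mulKV; apply: (canr x); rewrite mulRV -M.
  rewrite mulKV mulRV.
  set U := lldiv c _; set V := lmul (f b) y.
  apply: (can_inj fK); apply: (canl c); rewrite finvK mulKV -P !finvK mulKV.
  by rewrite M P.
have mu1 : mu f finv x (lone Q) = lone Q.
  by rewrite /mu /Rinv /Rmap /= f1 mul1l fK -{1}(mul1l x) divKr.
have ag : forall a, al a = ga a.
  by move=> a; have := key a (lone Q); rewrite mu1 !mul1r.
have ad : forall b, al b = lmul (al (lone Q)) (mu f finv x b).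
  by move=> b; rewrite key mul1l ag.
have d0 : al (lone Q) = lmul (linv x) (finv (lmul (lmul (linv c) (f x)) c)).
  rewrite /al f1 mul1r LIP; congr (lmul _ (finv _)).
  apply: (canl c); rewrite mulKV -/y -LIP.
  by rewrite FL mulKV.
split.
  exists (fun a => finv (lrdiv (f (lmul a x)) y)) => a;
    rewrite /mu /Rinv /Rmap /=.
    by rewrite mulRV finvK -/y divKr fK.
  by rewrite finvK -/y mulRV fK divKr.
move=> a b; rewrite -d0 -ad key -ag -ad //.
Qed.
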